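(* Let $G$ be a finite group and let $H$ be a $2$-subgroup of $G$. Then $H$ is a perfect code of $G$ if and only if, for each $a\in N_G(H)\setminus H$ with $a^2\in H$, the subgroup $H$ has a complement in $H\langle a\rangle$.
   Context: For a group $G$ with identity $e$ and an inverse-closed subset $S\subseteq G\setminus\{e\}$, the Cayley graph $\mathrm{Cay}(G,S)$ has vertex set $G$ and edges $\{g,sg\}$ for $s\in S$, $g\in G$. A perfect code in a graph is an independent set $C$ of vertices such that every vertex outside $C$ is adjacent to exactly one vertex of $C$. A subgroup $H$ of $G$ is a perfect code of $G$ if some Cayley graph of $G$ admits $H$ as a perfect code. $N_G(H)$ is the normalizer of $H$ in $G$. *)

(* Defs.v *)
From mathcomp Require Import all_boot all_fingroup gproduct pgroup.
Set Implicit Arguments. Unset Strict Implicit. Unset Printing Implicit Defensive.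
Import GroupScope.
Local Open Scope group_scope.

(* Cayley graph Cay(G,S): vertex set G, edges {g, s g} for s in S, g in G.
   Thus x and y are adjacent iff y * x^-1 \in S (equivalently x * y^-1 \in S
   when S is inverse-closed). *)
Definition cay_adj (gT : finGroupType) (S : {set gT}) (x y : gT) : bool :=
  y * x^-1 \in S.

Definition connection_set (gT : finGroupType) (G S : {set gT}) : Prop :=
  S \subset G :\ 1 /\ (forall s, s \in S -> s^-1 \in S).

Definition cay_perfect_code (gT : finGroupType) (G S C : {set gT}) : Prop :=
  [/\ C \subset G,
      (forall c c', c \in C -> c' \in C -> ~~ cay_adj S c c') &
      (forall x, x \in G :\: C -> #|[set c in C | cay_adj S c x]| = 1%N)].

Definition subgroup_perfect_code (gT : finGroupType) (G H : {set gT}) : Prop :=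
  exists S : {set gT}, connection_set G S /\ cay_perfect_code G S H.

(* Main.v *)
Require Import Defs.
From mathcomp Require Import all_boot all_fingroup gproduct pgroup.
From mathcomp Require Import zify.
Set Implicit Arguments. Unset Strict Implicit. Unset Printing Implicit Defensive.
Import GroupScope.
Local Open Scope group_scope.

Section DC.
Variables (gT : finGroupType) (H : {group gT}).
Implicit Types (x y z u w g : gT) (W R S : {set gT}).

Definition dc x : {set gT} := [set h1 * x * h2 | h1 in H, h2 in H].

Lemma dcP x y : reflect (exists h1, exists h2, [/\ h1 \in H, h2 \in H & y = h1 * x * h2]) (y \in dc x).
Proof.
apply: (iffP imset2P) => [[h1 h2 H1 H2 ->]|[h1 [h2 [H1 H2 ->]]]]; first by exists h1, h2.
exact: (Imset2spec H1 H2).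
Qed.

Lemma dc_intro h1 h2 x : h1 \in H -> h2 \in H -> h1 * x * h2 \in dc x.
Proof. by move=> ??; apply/dcP; exists h1, h2. Qed.

Lemma dc_refl x : x \in dc x.
Proof. by have := @dc_intro 1 1 x (group1 H) (group1 H); rewrite mul1g mulg1. Qed.

Lemma dc_sym x y : y \in dc x -> x \in dc y.
Proof.
case/dcP=> h1 [h2 [H1 H2 ->]].
have := @dc_intro h1^-1 h2^-1 (h1 * x * h2); rewrite !mulgA mulVg mul1g mulgK.
by apply; rewrite groupV.
Qed.

Lemma dc_symE x y : (y \in dc x) = (x \in dc y).
Proof. by apply/idP/idP; apply: dc_sym. Qed.

Lemma dc_trans x y z : y \in dc x -> z \in dc y -> z \in dc x.
Proof.
case/dcP=> h1 [h2 [H1 H2 ->]]; case/dcP=> a [b [Ha Hb ->]].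
have -> : a * (h1 * x * h2) * b = (a * h1) * x * (h2 * b) by rewrite !mulgA.
by apply: dc_intro; rewrite groupM.
Qed.

Lemma dc_inv x y : y \in dc x -> y^-1 \in dc x^-1.
Proof.
case/dcP=> h1 [h2 [H1 H2 ->]]; rewrite !invMg mulgA.
by apply: dc_intro; rewrite groupV.
Qed.

Lemma dc_invE x y : (y^-1 \in dc x^-1) = (y \in dc x).
Proof.
apply/idP/idP; last exact: dc_inv.
by move/dc_inv; rewrite !invgK.
Qed.

Lemma dc_eq x y z : y \in dc x -> (y \in dc z) = (x \in dc z).
Proof.
move=> yx; apply/idP/idP => [yz|xz]; first exact: (dc_trans yz (dc_sym yx)).
exact: (dc_trans xz yx).
Qed.

Lemma lcoset_dc x y : y \in x *: H -> y \in dc x.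
Proof.
by rewrite mem_lcoset => Hy; have := @dc_intro 1 _ x (group1 H) Hy; rewrite mul1g mulVKg.
Qed.

Lemma coset_trans u x y : u \in x *: H -> u \in y *: H -> y \in x *: H.
Proof.
move=> /lcoset_eqP ux /lcoset_eqP uy.
by rewrite -ux uy lcoset_refl.
Qed.

Lemma coset_sym x y : y \in x *: H -> x \in y *: H.
Proof. by move=> yx; exact: (coset_trans (lcoset_refl H y) yx). Qed.

Lemma card_lc_dc x z : #|x *: H :&: dc z| = if x \in dc z then #|H| else 0%N.
Proof.
case: ifP => Hx.
  rewrite (setIidPl _) ?card_lcoset //; apply/subsetP => u Hu.
  by rewrite (dc_eq _ (lcoset_dc Hu)).
suff -> : x *: H :&: dc z = set0 by rewrite cards0.
apply/setP => u; rewrite !inE.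
apply/negbTE/andP => -[Hu Hu'].
by rewrite (dc_eq _ (lcoset_dc Hu)) Hx in Hu'.
Qed.

Lemma card_split W R D : R \subset W -> #|W :&: D| = (#|(W :\: R) :&: D| + #|R :&: D|)%N.
Proof.
move=> sRW; rewrite -(cardsID R (W :&: D)) addnC; apply: f_equal2; apply: eq_card => u; rewrite !inE.
  by rewrite andbA.
case: (boolP (u \in R)) => ur; last by rewrite !andbF.
by rewrite (subsetP sRW _ ur) !andbT.
Qed.

Lemma card_U2 x y D : y \notin x *: H ->
  #|(x *: H :|: y *: H) :&: D| = (#|x *: H :&: D| + #|y *: H :&: D|)%N.
Proof.
move=> nxy; rewrite setIUl cardsU.
suff -> : x *: H :&: D :&: (y *: H :&: D) = set0 by rewrite cards0 subn0.
apply/setP => u; rewrite !inE.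
apply/negbTE/negP => /andP[/andP[u1 _] /andP[u2 _]].
by rewrite (coset_trans u1 u2) in nxy.
Qed.


Definition lcclosed W := forall w, w \in W -> w *: H \subset W.
Definition invc (G W : {set gT}) := forall z, z \in G -> z^-1 \notin dc z ->
  #|W :&: dc z| = #|W :&: dc z^-1|.
Definition invd (G W : {set gT}) := forall z, z \in G -> z^-1 \in dc z -> z \notin 'N(H) ->
  (2 * #|H|)%N %| #|W :&: dc z|.
Definition good W S := [/\ S \subset W, (forall s, s \in S -> s^-1 \in S) &
  forall w, w \in W -> #|S :&: w *: H| = 1%N].

Lemma lccD W R : lcclosed W -> (forall u w, u \in R -> u \in w *: H -> w \in R) ->
  lcclosed (W :\: R).
Proof.
move=> cW cR w; rewrite inE => /andP[nw Ww]; apply/subsetP => u Hu.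
rewrite inE (subsetP (cW _ Ww) _ Hu) andbT; apply: contra nw => uR; exact: cR _ _ uR Hu.
Qed.

Lemma cR1 x u w : u \in x *: H -> u \in w *: H -> w \in x *: H.
Proof. exact: coset_trans. Qed.

Lemma cR2 x y u w : u \in x *: H :|: y *: H -> u \in w *: H -> w \in x *: H :|: y *: H.
Proof.
rewrite !inE => /orP[] uxy uw; first by rewrite (coset_trans uxy uw).
by rewrite (coset_trans uxy uw) orbT.
Qed.

Lemma good1 W S x t : lcclosed W -> x \in W -> t \in x *: H -> t^-1 = t ->
  good (W :\: x *: H) S -> good W (t |: S).
Proof.
move=> cW Wx tx tV [sSW Sinv Scnt]; split.
- apply/subsetP => u; rewrite !inE => /orP[/eqP->|uS]; first exact: (subsetP (cW _ Wx)).
  by have := subsetP sSW _ uS; rewrite inE => /andP[].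
- move=> s; rewrite !inE => /orP[/eqP->|sS]; first by rewrite tV eqxx.
  by rewrite Sinv ?orbT.
- move=> w Ww; case: (boolP (w \in x *: H)) => wx.
    have -> : (t |: S) :&: w *: H = [set t].
      rewrite (lcoset_eqP wx); apply/setP => u; rewrite !inE.
      case: (eqVneq u t) => [->|_] /=; first by rewrite tx.
      apply/negbTE/andP => -[uS ux]; have := subsetP sSW _ uS; by rewrite inE ux.
    by rewrite cards1.
  have Ww' : w \in W :\: x *: H by rewrite inE wx Ww.
  rewrite -(Scnt _ Ww'); apply: eq_card => u; rewrite !inE.
  case: (eqVneq u t) => [->|_] //=.
  have tw : t \notin w *: H by apply: contra wx => tw; exact: coset_trans tx tw.
  by rewrite (negbTE tw) !andbF.
Qed.

Lemma good2 W S x y g : lcclosed W -> x \in W -> y \in W -> y \notin x *: H ->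
  g \in x *: H -> g^-1 \in y *: H ->
  good (W :\: (x *: H :|: y *: H)) S -> good W (g |: (g^-1 |: S)).
Proof.
move=> cW Wx Wy nyx gx gy [sSW Sinv Scnt].
have Sout u : u \in S -> (u \notin x *: H) && (u \notin y *: H).
  by move=> uS; have := subsetP sSW _ uS; rewrite !inE negb_or => /andP[].
have gny : g \notin y *: H by apply: contra nyx => gy'; exact: coset_trans gx gy'.
have gVnx : g^-1 \notin x *: H by apply: contra nyx => gx'; exact: coset_trans gx' gy.
split.
- apply/subsetP => u; rewrite !inE => /or3P[/eqP->|/eqP->|uS].
  + exact: (subsetP (cW _ Wx)).
  + exact: (subsetP (cW _ Wy)).
  + by have := subsetP sSW _ uS; rewrite inE => /andP[].
- move=> s; rewrite !inE => /or3P[/eqP->|/eqP->|sS].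
  + by rewrite eqxx orbT.
  + by rewrite invgK eqxx.
  + by rewrite Sinv ?orbT.
- move=> w Ww; case: (boolP (w \in x *: H)) => wx.
    have -> : (g |: (g^-1 |: S)) :&: w *: H = [set g].
      rewrite (lcoset_eqP wx); apply/setP => u; rewrite !inE.
      case: (eqVneq u g) => [->|_] /=; first by rewrite gx.
      case: (eqVneq u g^-1) => [->|_] /=; first by rewrite (negbTE gVnx).
      apply/negbTE/andP => -[uS ux]; by have := Sout _ uS; rewrite ux.
    by rewrite cards1.
  case: (boolP (w \in y *: H)) => wy.
    have -> : (g |: (g^-1 |: S)) :&: w *: H = [set g^-1].
      rewrite (lcoset_eqP wy); apply/setP => u; rewrite !inE.
      case: (eqVneq u g) => [->|_] /=.
        rewrite (negbTE gny); apply/esym/eqP => gg; move: gny; by rewrite {1}gg gy.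
      case: (eqVneq u g^-1) => [->|_] /=; first by rewrite gy.
      apply/negbTE/andP => -[uS uy]; by have := Sout _ uS; rewrite uy andbF.
    by rewrite cards1.
  have Ww' : w \in W :\: (x *: H :|: y *: H) by rewrite !inE negb_or wx wy Ww.
  rewrite -(Scnt _ Ww'); apply: eq_card => u; rewrite !inE.
  have gw : g \notin w *: H by apply: contra wx => gw0; exact: coset_trans gx gw0.
  have gVw : g^-1 \notin w *: H by apply: contra wy => gw0; exact: coset_trans gy gw0.
  case: (eqVneq u g) => [->|_] /=; first by rewrite (negbTE gw) !andbF.
  case: (eqVneq u g^-1) => [->|_] //=; by rewrite (negbTE gVw) !andbF.
Qed.


Lemma normal_dc x y : x \in 'N(H) -> y \in dc x -> x^-1 * y \in H.
Proof.
move=> nx /dcP [h1 [h2 [H1 H2 ->]]]; rewrite !mulgA; apply: groupM => //.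
by rewrite -mulgA -conjgE memJ_norm.
Qed.

Lemma sq_inv x : x^-1 * x^-1 \in H -> x ^+ 2 \in H.
Proof. by rewrite -invMg groupV expgS expg1. Qed.

Lemma inv_step1 G W x : lcclosed W -> x \in W -> x \in 'N(H) -> x ^+ 2 \in H ->
  invc G W -> invd G W -> invc G (W :\: x *: H) /\ invd G (W :\: x *: H).
Proof.
move=> cW Wx nx x2 IC ID.
have xVx : x^-1 \in dc x.
  apply: lcoset_dc; rewrite mem_lcoset -invMg groupV.
  by move: x2; rewrite expgS expg1.
have key z : x \in dc z -> z^-1 \in dc z.
  move=> xz; have zx := dc_sym xz; have zVxV := dc_inv zx.
  exact: dc_trans xz (dc_trans xVx zVxV).
have key' z : x \in dc z^-1 -> z^-1 \in dc z.
  by move/key; rewrite invgK => h; move: (dc_inv h); rewrite invgK.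
have keyN z : x \in dc z -> z \in 'N(H).
  move=> /dc_sym /dcP [h1 [h2 [H1 H2 ->]]].
  by rewrite !groupM // (subsetP (normG H)).
have sRW : x *: H \subset W := cW _ Wx.
split.
- move=> z Gz nz; move: (IC z Gz nz).
  rewrite (card_split (dc z) sRW) (card_split (dc z^-1) sRW) !card_lc_dc.
  have -> : (x \in dc z) = false by apply/negbTE; apply: contra nz; exact: key.
  have -> : (x \in dc z^-1) = false by apply/negbTE; apply: contra nz; exact: key'.
  by rewrite !addn0.
- move=> z Gz zz nN; move: (ID z Gz zz nN).
  rewrite (card_split (dc z) sRW) card_lc_dc.
  have -> : (x \in dc z) = false by apply/negbTE; apply: contra nN; exact: keyN.
  by rewrite addn0.
Qed.

Lemma inv_step2 G W x y : lcclosed W -> x \in W -> y \in W -> y \in dc x^-1 ->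
  y \notin x *: H -> invc G W -> invd G W ->
  invc G (W :\: (x *: H :|: y *: H)) /\ invd G (W :\: (x *: H :|: y *: H)).
Proof.
move=> cW Wx Wy yx nyx IC ID.
have sRW : x *: H :|: y *: H \subset W by rewrite subUset !cW.
have E1 z : (y \in dc z) = (x \in dc z^-1) by rewrite (dc_eq _ yx) -dc_invE invgK.
have E2 z : (y \in dc z^-1) = (x \in dc z) by rewrite E1 invgK.
split.
- move=> z Gz nz; move: (IC z Gz nz).
  rewrite (card_split (dc z) sRW) (card_split (dc z^-1) sRW) !card_U2 //.
  rewrite !card_lc_dc (E1 z) (E2 z).
  by do 2 case: ifP => _; lia.
- move=> z Gz zz nN; move: (ID z Gz zz nN).
  rewrite (card_split (dc z) sRW) card_U2 // !card_lc_dc (E1 z).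
  have -> : (x \in dc z^-1) = (x \in dc z) by rewrite dc_symE (dc_eq _ zz) dc_symE.
  case: ifP => _; last by rewrite !addn0.
  by rewrite addnn -mul2n dvdn_addl.
Qed.

Lemma build G
  (hyp : forall x, x \in G :\: H -> x \in 'N(H) -> x ^+ 2 \in H ->
     exists t, t \in x *: H /\ t^-1 = t) n :
  forall W, #|W| <= n -> W \subset G :\: H -> lcclosed W -> invc G W -> invd G W ->
  exists S, good W S.
Proof.
have good0 : good set0 set0.
  by split; [exact: sub0set | move=> s; rewrite inE | move=> w; rewrite inE].
elim: n => [|n IH] W.
  by rewrite leqn0 cards_eq0 => /eqP -> *; exists set0.
move=> cardW sWG cW IC ID.
case: (set_0Vmem W) => [->|[x Wx]]; first by exists set0.
have xGH := subsetP sWG _ Wx.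
have /andP[nHx Gx] : (x \notin H) && (x \in G) by move: xGH; rewrite inE.
have ltW R : x \in R -> #|W :\: R| <= n.
  move=> xR; rewrite -ltnS; apply: leq_trans cardW; apply: proper_card.
  by apply/properP; split; [exact: subsetDl | exists x => //; rewrite inE xR].
have sub' R : W :\: R \subset G :\: H := subset_trans (subsetDl W R) sWG.
case: (boolP ((x \in 'N(H)) && (x ^+ 2 \in H))) => [/andP[nx x2]|notA].
  have [t [tx tV]] := hyp x xGH nx x2.
  have [IC' ID'] := inv_step1 cW Wx nx x2 IC ID.
  have [S gS] := IH _ (ltW _ (lcoset_refl H x)) (sub' _) (lccD cW (@cR1 x)) IC' ID'.
  by exists (t |: S); exact: good1 cW Wx tx tV gS.
have [y [Wy yx nyx]] : exists y, [/\ y \in W, y \in dc x^-1 & y \notin x *: H].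
  case: (boolP (x^-1 \in dc x)) => xVx.
    have nx : x \notin 'N(H).
      apply: contra notA => nx; rewrite nx /=.
      exact: sq_inv (normal_dc nx xVx).
    have := ID x Gx xVx nx.
    case: (set_0Vmem ((W :&: dc x) :\: x *: H)) => [E|[y]].
      have sub : W :&: dc x \subset x *: H by rewrite -setD_eq0 E.
      have le := subset_leq_card sub; rewrite card_lcoset in le.
      have pos : 0 < #|W :&: dc x| by apply/card_gt0P; exists x; rewrite inE Wx dc_refl.
      move=> dv; exfalso; have h2 := dvdn_leq pos dv; have h1 := cardG_gt0 H; pose k := #|H|; change (is_true (#|W :&: dc x| <= k)%N) in le; change (is_true (0 < k)%N) in h1; change (is_true (2 * k <= #|W :&: dc x|)%N) in h2; clear -le h1 h2; lia.
    rewrite !inE => /andP[nyx' /andP[Wy' yx']] _.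
    by exists y; split => //; rewrite (dc_eq _ yx') dc_symE.
  have pos : 0 < #|W :&: dc x| by apply/card_gt0P; exists x; rewrite inE Wx dc_refl.
  rewrite (IC x Gx xVx) in pos.
  case/card_gt0P: pos => y; rewrite inE => /andP[Wy yx].
  exists y; split => //; apply: contra xVx => yxH.
  by rewrite -(dc_eq _ yx) (lcoset_dc yxH).
case/dcP: (yx) => h1 [h2 [H1 H2 yE]].
pose g := x * h1^-1.
have gx : g \in x *: H by rewrite mem_lcoset mulKg groupV.
have gy : g^-1 \in y *: H.
  by apply: coset_sym; rewrite yE /g invMg invgK mem_lcoset mulKg.
have [IC' ID'] := inv_step2 cW Wx Wy yx nyx IC ID.
have xR : x \in x *: H :|: y *: H by rewrite inE lcoset_refl.
have [S gS] := IH _ (ltW _ xR) (sub' _) (lccD cW (@cR2 x y)) IC' ID'.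
by exists (g |: (g^-1 |: S)); exact: good2 cW Wx Wy nyx gx gy gS.
Qed.


Lemma dc_notH z u : z \notin H -> u \in dc z -> u \notin H.
Proof.
move=> nz /dcP [h1 [h2 [H1 H2 ->]]]; apply: contra nz.
by rewrite groupMr // groupMl.
Qed.

Lemma W0_dc (G : {group gT}) z : H \subset G -> z \in G -> z \notin H ->
  (G :\: H) :&: dc z = dc z.
Proof.
move=> sHG Gz nz; apply/setIidPr; apply/subsetP => u uz.
rewrite inE (dc_notH nz uz); move: uz => /dcP [h1 [h2 [H1 H2 ->]]].
by rewrite !groupM // (subsetP sHG).
Qed.

Lemma dc_invset z : dc z^-1 = (dc z)^-1.
Proof. by apply/setP => u; rewrite mem_invg -dc_invE !invgK. Qed.

Lemma card_dc z : (#|dc z| * #|H :&: H :^ z^-1| = #|H| * #|H|)%N.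
Proof.
have -> : dc z = (H * H :^ z^-1) :* z.
  apply/setP => u; apply/dcP/rcosetP => [[h1 [h2 [H1 H2 ->]]]|[v /mulsgP [a b Ha Hb ->] ->]].
    exists (h1 * h2 ^ z^-1); first by apply: mem_mulg; rewrite ?memJ_conjg.
    by rewrite conjgE invgK !mulgA mulgVK.
  exists a, (b ^ z); split => //; first by rewrite -mem_conjgV.
  by rewrite conjgE !mulgA mulgK.
rewrite card_rcoset -(mul_cardG H (H :^ z^-1)%G) /= cardJg. done.
Qed.

Lemma dvd_dc z : 2.-group H -> z \notin 'N(H) -> (2 * #|H|)%N %| #|dc z|.
Proof.
move=> pH nz; pose K := (H :&: H :^ z^-1)%G.
have sKH : K \subset H := subsetIl _ _.
have cd : (#|dc z| * #|K| = #|H| * #|H|)%N := card_dc z.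
have LK := Lagrange sKH.
have E : #|dc z| = (#|H : K| * #|H|)%N.
  apply/eqP; rewrite -(eqn_pmul2r (cardG_gt0 K)).
  by rewrite cd; apply/eqP; rewrite -{1}LK [RHS]mulnC mulnA.
rewrite E dvdn_pmul2r ?cardG_gt0 //.
have nat2 : 2.-nat #|H : K| := pnat_dvd (dvdn_indexg H K) pH.
have [k Ek] := p_natP nat2.
case: k Ek => [|k] Ek; last by rewrite Ek expnS dvdn_mulr.
exfalso.
have cK : #|K| = #|H| by rewrite -LK Ek muln1.
have eKH : (K :=: H) by apply/eqP; rewrite eqEcard sKH cK leqnn.
have eKJ : (K :=: H :^ z^-1) by apply/eqP; rewrite eqEcard subsetIr cK cardJg leqnn.
have : z^-1 \in 'N(H) by apply/normP; rewrite -eKJ eKH.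
by rewrite groupV (negbTE nz).
Qed.

Lemma cnt_conv S x : #|[set c in H | x * c^-1 \in S]| = #|S :&: x *: H|.
Proof.
rewrite -(card_preimset (S :&: x *: H) (f := fun c => x * c^-1)); last first.
  by move=> a b /mulgI /invg_inj.
by apply: eq_card => c; rewrite !inE mem_lcoset mulKg groupV andbC.
Qed.

End DC.

Theorem theorem3p1 (gT : finGroupType) (G H : {group gT}) :
  H \subset G -> 2.-group H ->
  (subgroup_perfect_code G H <->
   (forall a : gT, a \in 'N_G(H) :\: H -> a ^+ 2 \in H ->
      exists K : {group gT}, K \in [complements to H in H <*> <[a]>])).
Proof.
move=> sHG pH; split.
- case=> S [[sSG Sinv] [_ indep cnt]] a aN a2.
  move: aN => /setDP [/setIP [aG aNH] naH].
  have aGH : a \in G :\: H by apply/setDP.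
  have c1 := cnt a aGH; rewrite /cay_adj cnt_conv in c1.
  have /cards1P [s Es] : #|S :&: a *: H| == 1%N by rewrite c1.
  have : s \in S :&: a *: H by rewrite Es set11.
  move=> /setIP [sS sa].
  have sVa : s^-1 \in a *: H.
    rewrite mem_lcoset.
    have -> : a^-1 * s^-1 = (a^-1 * s)^-1 ^ a * (a^-1 * a^-1).
      by rewrite conjgE invMg invgK !mulgA !mulgK.
    apply: groupM.
      by rewrite memJ_norm // groupV -mem_lcoset.
    by rewrite -invMg groupV; move: a2; rewrite expgS expg1.
  have ss : s^-1 = s by apply/set1P; rewrite -Es inE Sinv // sVa.
  have snH : s \notin H.
    by apply: contra naH => sH; move: sa; rewrite mem_lcoset groupMr // groupV.
  have s1 : s != 1 by apply: contra snH => /eqP ->; exact: group1.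
  have d2 : #[s] %| 2 by rewrite cyclic.order_dvdn expgS expg1 -{2}ss mulgV.
  have g1 : 1 < #[s] by rewrite order_gt1.
  have ord : #[s] = 2 by apply/eqP; rewrite eqn_leq g1 andbT (dvdn_leq (isT : 0 < 2) d2).
  exists <[s]>%G; rewrite inE; apply/andP; split.
    by rewrite setIC prime_TIg ?cycle_subG // -orderE ord.
  have sN : s \in 'N(H).
    by rewrite -(mulVKg a s) groupM // (subsetP (normG H)) // -mem_lcoset.
  rewrite -norm_joinEr ?cycle_subG //.
  rewrite eqEsubset !join_subG !joing_subl !cycle_subG /=.
  apply/andP; split.
    rewrite -(mulVKg a s) groupM //; first by rewrite (subsetP (joing_subr _ _)) ?cycle_id.
    by rewrite (subsetP (joing_subl _ _)) // -mem_lcoset.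
  rewrite -(mulVKg s a) groupM //; first by rewrite (subsetP (joing_subr _ _)) ?cycle_id.
  rewrite (subsetP (joing_subl _ _)) //.
  by rewrite -[s^-1 * a]invgK invMg invgK groupV -mem_lcoset.
- move=> hyp.
  have hyp' : forall x, x \in G :\: H -> x \in 'N(H) -> x ^+ 2 \in H ->
      exists t, t \in x *: H /\ t^-1 = t.
    move=> x /setDP [Gx nxH] nx x2.
    have [K] : exists K : {group gT}, K \in [complements to H in H <*> <[x]>].
      by apply: hyp => //; apply/setDP; split => //; apply/setIP.
    rewrite inE => /andP[/eqP tI /eqP eK].
    have xK : x \in H * K by rewrite eK (subsetP (joing_subr _ _)) ?cycle_id.
    case/mulsgP: xK => h k Hh Kk xE.
    have kE : k = h^-1 * x by rewrite xE mulKg.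
    exists k; split.
      by rewrite mem_lcoset kE -conjgE memJ_norm // groupV.
    have kk : k * k \in H.
      have -> : k * k = h^-1 * (h^-1 ^ x^-1) * (x * x).
        by rewrite kE conjgE invgK !mulgA mulgVK.
      apply: groupM; last by move: x2; rewrite expgS expg1.
      by rewrite groupM ?groupV // memJ_norm ?groupV.
    have : k * k \in H :&: K by rewrite inE kk groupM.
    rewrite tI => /set1P kk1.
    by apply/eqP; rewrite eq_invg_mul kk1.
  have lcc0 : lcclosed H (G :\: H).
    move=> w /setDP [wG nwH]; apply/subsetP => u uw.
    have hu : w^-1 * u \in H by rewrite -mem_lcoset.
    rewrite -(mulVKg w u); apply/setDP; split.
      by rewrite groupM // (subsetP sHG).
    by rewrite groupMr.
  have ic0 : invc H G (G :\: H).
    move=> z Gz nz.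
    have nzH : z \notin H.
      apply: contra nz => zH; have := @dc_intro gT H z^-1 z^-1 z; rewrite mulVg mul1g.
      by apply; rewrite groupV.
    rewrite !W0_dc ?groupV //.
    by rewrite dc_invset card_invg.
  have id0 : invd H G (G :\: H).
    move=> z Gz zz nN.
    have nzH : z \notin H by apply: contra nN => zH; exact: (subsetP (normG H)).
    by rewrite W0_dc //; exact: dvd_dc.
  have [S [sSW Sinv Scnt]] :=
    @build gT H G hyp' #|G :\: H| (G :\: H) (leqnn _) (subxx _) lcc0 ic0 id0.
  exists S; split.
    split => //; apply/subsetP => s sS.
    have /setDP [sG nsH] := subsetP sSW _ sS.
    apply/setD1P; split => //; apply: contra nsH => /eqP ->; exact: group1.
  split => //.
    move=> c c' cH c'H; rewrite /cay_adj; apply/negP => cs.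
    have /setDP [_ nH] := subsetP sSW _ cs.
    by rewrite groupM ?groupV in nH.
  by move=> x xGH; rewrite /cay_adj cnt_conv; exact: Scnt.
Qed.
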